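(* Let $\Gamma\curvearrowright X, I$ be a dynamical ideal with permutation model $W[[X]]$, and let $A\in W[[X]]$. The following are equivalent: (1) $A$ is well-orderable in $W[[X]]$; (2) there is $b\in I$ such that $\mathrm{pstab}(b)\subseteq\mathrm{pstab}(A)$, i.e. every element of $\mathrm{pstab}(b)$ fixes every element of $A$; (3) $\mathcal{P}(\mathcal{P}(A))\cap W[[X]]=\mathcal{P}(\mathcal{P}(A))\cap V[[X]]$, where the power sets are computed in $V[[X]]$ (equivalently, every subset in $V[[X]]$ of $\mathcal P(A)\cap V[[X]]$ lies in $W[[X]]$); (4) $\mathcal{P}(\mathcal{P}(A))$, computed in $W[[X]]$, is well-orderable in $W[[X]]$.
   Context: Work in ZFC. For a set $X$, $V[[X]]$ denotes the (unique up to isomorphism) well-founded model of ZFCA whose set of atoms is exactly $X$ and in which every set of elements is represented by an element. If a group $\Gamma$ acts on $X$, the action extends uniquely to an action on $V[[X]]$ by $\in$-automorphisms via $\gamma\cdot A=\{\gamma\cdot B: B\in A\}$ for non-atoms $A$; it fixes all pure sets (sets with no atoms in their transitive closure). For $A\in V[[X]]$, $\mathrm{stab}(A)=\{\gamma\in\Gamma:\gamma\cdot A=A\}$; for a set $a$, $\mathrm{pstab}(a)=\{\gamma\in\Gamma: \gamma\cdot B=B\text{ for all }B\in a\}$. A dynamical ideal $\Gamma\curvearrowright X, I$ consists of a group $\Gamma$ acting on a set $X$ and an ideal $I$ of subsets of $X$ containing all singletons and invariant under the action ($\gamma\cdot a\in I$ for $a\in I$). $A\in V[[X]]$ is symmetric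 if there is $b\in I$ with $\mathrm{pstab}(b)\subseteq\mathrm{stab}(A)$. The permutation model $W[[X]]$ is the class of hereditarily symmetric elements of $V[[X]]$; it is a transitive model of ZFA. *)

(* Defs.v *)
(* Sets with atoms modelled Aczel-style: a set is given by an
   index type and a family of elements; equality is extensional (eqv). *)

Record dynIdeal := DynIdeal {
  atomT : Type;
  grp : Type;
  g1 : grp;
  gmul : grp -> grp -> grp;
  ginv : grp -> grp;
  gmulA : forall a b c, gmul a (gmul b c) = gmul (gmul a b) c;
  gmul1l : forall a, gmul g1 a = a;
  gmulVl : forall a, gmul (ginv a) a = g1;
  act : grp -> atomT -> atomT;
  act1 : forall x, act g1 x = x;
  actM : forall g h x, act (gmul g h) x = act g (act h x);
  ideal : (atomT -> Prop) -> Prop;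
  ideal_sub : forall a b : atomT -> Prop,
      ideal b -> (forall x, a x -> b x) -> ideal a;
  ideal_union : forall a b : atomT -> Prop,
      ideal a -> ideal b -> ideal (fun x => a x \/ b x);
  ideal_single : forall x : atomT, ideal (fun y => y = x);
  ideal_inv : forall (g : grp) (a : atomT -> Prop),
      ideal a -> ideal (fun y => exists x, a x /\ y = act g x)
}.

Inductive vset (X : Type) : Type :=
| Atom : X -> vset X
| Sets : forall I : Type, (I -> vset X) -> vset X.
Arguments Atom {X} _.
Arguments Sets {X} I _.

Section V.
Variable X : Type.

Fixpoint eqv (a b : vset X) : Prop :=
  match a, b with
  | Atom x, Atom y => x = y
  | Sets Ia f, Sets Ja g =>
      (forall i, exists j, eqv (f i) (g j)) /\ (forall j, exists i, eqv (f i) (g j))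
  | _, _ => False
  end.

Definition mem (a b : vset X) : Prop :=
  match b with
  | Atom _ => False
  | Sets Ia f => exists i, eqv a (f i)
  end.

Definition isSet (a : vset X) : Prop :=
  match a with Atom _ => False | Sets _ _ => True end.

Definition subset (B A : vset X) : Prop :=
  isSet B /\ forall c, mem c B -> mem c A.

Definition subPow (C A : vset X) : Prop :=
  isSet C /\ forall B, mem B C -> subset B A.

Definition sing (a : vset X) : vset X := Sets unit (fun _ => a).
Definition upair (a b : vset X) : vset X :=
  Sets bool (fun t => if t then a else b).
Definition kpair (a b : vset X) : vset X := upair (sing a) (upair a b).
End V.

Arguments eqv {X} _ _.
Arguments mem {X} _ _.
Arguments isSet {X} _.
Arguments subset {X} _ _.
Arguments subPow {X} _ _.
Arguments sing {X} _.
Arguments upair {X} _ _.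
Arguments kpair {X} _ _.

Section Perm.
Variable D : dynIdeal.
Local Notation X := (atomT D).
Local Notation V := (vset X).

Fixpoint gact (g : grp D) (a : V) : V :=
  match a with
  | Atom x => Atom (act D g x)
  | Sets Ia f => Sets Ia (fun i => gact g (f i))
  end.

Definition fixesAtoms (g : grp D) (b : X -> Prop) : Prop :=
  forall x, b x -> act D g x = x.

Definition inStab (g : grp D) (A : V) : Prop := eqv (gact g A) A.

Definition inPstab (g : grp D) (A : V) : Prop :=
  forall B, mem B A -> eqv (gact g B) B.

Definition symmetric (A : V) : Prop :=
  exists b, ideal D b /\ forall g, fixesAtoms g b -> inStab g A.

Fixpoint inW (A : V) : Prop :=
  match A with
  | Atom _ => True
  | Sets Ia f => symmetric (Sets Ia f) /\ forall i, inW (f i)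
  end.

Definition wellorderableW (A : V) : Prop :=
  exists R : V, inW R /\
    (forall p, mem p R -> exists a b, mem a A /\ mem b A /\ eqv p (kpair a b)) /\
    let rel a b := mem (kpair a b) R in
    (forall a, mem a A -> ~ rel a a) /\
    (forall a b c, mem a A -> mem b A -> mem c A -> rel a b -> rel b c -> rel a c) /\
    (forall a b, mem a A -> mem b A -> rel a b \/ eqv a b \/ rel b a) /\
    (forall S, inW S -> subset S A -> (exists a, mem a S) ->
       exists m, mem m S /\ forall a, mem a S -> ~ rel a m).

Definition isPowW (A P : V) : Prop :=
  inW P /\ forall C, mem C P <-> (inW C /\ subset C A).

End Perm.

(* Main.v *)
Require Import Defs.
From Stdlib Require Import Classical.

Module WO.
From mathcomp Require Import ssreflect ssrfun ssrbool eqtype boolp wochoice.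
Lemma wo_exists0 (T : Type) : exists R : T -> T -> Prop,
 (forall x y, R x y -> R y x -> x = y) /\ (forall x, R x x) /\ (forall x y, R x y \/ R y x) /\
 (forall P : T -> Prop, (exists x, P x) -> exists m, P m /\ forall x, P x -> R m x).
Proof.
have [R Rwo] := well_ordering_principle {classic T}.
exists (fun x y => R x y).
have tot := @wo_chainW _ R predT (fun A _ => Rwo A).
have anti := @wo_chain_antisymmetric _ R predT (fun A _ => Rwo A).
split; [|split; [|split]].
- move=> x y h1 h2. by apply: anti; rewrite ?h1 ?h2.
- move=> x. by have /orP[] := tot x x isT isT.
- move=> x y. by have /orP[] := tot x y isT isT; auto.
- move=> P [x Px].
  have ne : nonempty [pred y : {classic T} | `[< P y >]].
    exists x. rewrite inE. by apply/asboolP.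
  have [m [[Pm lb] _]] := Rwo _ ne.
  exists m; split; first by move: Pm; rewrite inE => /asboolP.
  move=> y Py. apply: lb. rewrite inE. by apply/asboolP.
Qed.
End WO.
Unset Asymmetric Patterns.

Lemma wo_exists (T : Type) : exists R : T -> T -> Prop,
 (forall x y, R x y -> R y x -> x = y) /\ (forall x y z, R x y -> R y z -> R x z) /\
 (forall x y, R x y \/ R y x) /\
 (forall P : T -> Prop, (exists x, P x) -> exists m, P m /\ forall x, P x -> R m x).
Proof.
destruct (WO.wo_exists0 T) as [R [Ha [Hr [Ht Hm]]]].
exists R; split; [exact Ha|split; [|split; [exact Ht|exact Hm]]].
intros x y z Hxy Hyz.
destruct (Hm (fun w => w = x \/ w = y \/ w = z)) as [m [Pm Lm]]; [eauto|].
destruct Pm as [E|[E|E]]; rewrite E in Lm.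
- apply Lm; auto.
- assert (x = y) as E2 by (apply Ha; [exact Hxy| apply Lm; auto]). rewrite E2; exact Hyz.
- assert (y = z) as E2 by (apply Ha; [exact Hyz| apply Lm; auto]). rewrite <- E2; exact Hxy.
Qed.

Section Main.
Variable D : dynIdeal.
Local Notation X := (atomT D).
Local Notation V := (vset X).

Lemma eqv_refl : forall a : V, eqv a a.
Proof.
induction a as [x|I f IH]; simpl; auto.
split; intro i; exists i; apply IH.
Qed.

Lemma eqv_sym : forall a b : V, eqv a b -> eqv b a.
Proof.
induction a as [x|I f IH]; destruct b as [y|J g]; simpl; auto.
intros [H1 H2]; split.
- intro j; destruct (H2 j) as [i Hi]; exists i; auto.
- intro i; destruct (H1 i) as [j Hj]; exists j; auto.
Qed.

Lemma eqv_trans : forall a b c : V, eqv a b -> eqv b c -> eqv a c.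
Proof.
induction a as [x|I f IH]; destruct b as [y|J g]; destruct c as [z|K h]; simpl;
  try tauto.
- intros; congruence.
- intros [H1 H2] [H3 H4]; split.
  + intro i; destruct (H1 i) as [j Hj]; destruct (H3 j) as [k Hk]; exists k; eauto.
  + intro k; destruct (H4 k) as [j Hj]; destruct (H2 j) as [i Hi]; exists i; eauto.
Qed.

Lemma mem_eqv_l : forall a a' B : V, eqv a a' -> mem a B -> mem a' B.
Proof.
intros a a' [x|I f] H; simpl; auto.
intros [i Hi]; exists i; eapply eqv_trans; [apply eqv_sym, H|exact Hi].
Qed.

Lemma mem_eqv_r : forall a B B' : V, eqv B B' -> mem a B -> mem a B'.
Proof.
intros a [x|I f] [y|J g]; simpl; try tauto.
intros [H1 _] [i Hi]; destruct (H1 i) as [j Hj]; exists j; eapply eqv_trans; eauto.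
Qed.

Lemma gact_eqv : forall g (a b : V), eqv a b -> eqv (gact D g a) (gact D g b).
Proof.
intro g; induction a as [x|I f IH]; destruct b as [y|J h]; simpl; try tauto.
- intros; congruence.
- intros [H1 H2]; split.
  + intro i; destruct (H1 i) as [j Hj]; exists j; auto.
  + intro j; destruct (H2 j) as [i Hi]; exists i; auto.
Qed.

Lemma gact_mul : forall g h (a : V),
  eqv (gact D (gmul D g h) a) (gact D g (gact D h a)).
Proof.
intros g h; induction a as [x|I f IH]; simpl.
- apply actM.
- split; intro i; exists i; auto.
Qed.

Lemma gact_one : forall (a : V), eqv (gact D (g1 D) a) a.
Proof.
induction a as [x|I f IH]; simpl.
- apply act1.
- split; intro i; exists i; auto.
Qed.

Lemma gmulVr : forall g, gmul D g (ginv D g) = g1 D.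
Proof.
intro g.
assert (E : gmul D (ginv D g) (gmul D g (ginv D g)) = ginv D g).
{ rewrite gmulA, gmulVl, gmul1l; reflexivity. }
transitivity (gmul D (g1 D) (gmul D g (ginv D g))); [symmetry; apply gmul1l|].
transitivity (gmul D (gmul D (ginv D (ginv D g)) (ginv D g)) (gmul D g (ginv D g)));
  [rewrite gmulVl; reflexivity|].
rewrite <- gmulA, E. apply gmulVl.
Qed.

Lemma gact_invl : forall g (a : V), eqv (gact D (ginv D g) (gact D g a)) a.
Proof.
intros g a. eapply eqv_trans; [apply eqv_sym, gact_mul|].
rewrite gmulVl. apply gact_one.
Qed.

Lemma gact_invr : forall g (a : V), eqv (gact D g (gact D (ginv D g) a)) a.
Proof.
intros g a. eapply eqv_trans; [apply eqv_sym, gact_mul|].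
rewrite gmulVr. apply gact_one.
Qed.

Lemma gact_cancel : forall g (a b : V), eqv (gact D g a) (gact D g b) -> eqv a b.
Proof.
intros g a b H.
eapply eqv_trans; [apply eqv_sym, (gact_invl g)|].
eapply eqv_trans; [apply gact_eqv, H|]. apply gact_invl.
Qed.

Lemma act_invl : forall g x, act D (ginv D g) (act D g x) = x.
Proof. intros; rewrite <- actM, gmulVl; apply act1. Qed.

Lemma mem_gact : forall g (a B : V), mem a B -> mem (gact D g a) (gact D g B).
Proof.
intros g a [x|I f]; simpl; auto.
intros [i Hi]; exists i; apply gact_eqv; auto.
Qed.

Lemma mem_gact_inv : forall g (a B : V), mem a (gact D g B) -> mem (gact D (ginv D g) a) B.
Proof.
intros g a [x|I f]; simpl; auto.
intros [i Hi]; exists i.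
eapply eqv_trans; [apply gact_eqv, Hi|]. apply gact_invl.
Qed.

Definition elts (A : V) : Type := match A return Type with Atom _ => Empty_set | Sets J _ => J end.
Definition el (A : V) : elts A -> V :=
  match A return elts A -> V with
  | Atom _ => fun e => match e with end
  | Sets J f => f end.

Lemma mem_el : forall a A, mem a A <-> exists i, eqv a (el A i).
Proof.
intros a [x|J f]; simpl.
- split; [intros []| intros [i _]; destruct i].
- tauto.
Qed.

Lemma el_mem : forall A i, mem (el A i) A.
Proof. intros A i; apply mem_el; exists i; apply eqv_refl. Qed.

Lemma symm_eqv : forall A B : V, symmetric D A -> eqv A B -> symmetric D B.
Proof.
intros A B [b [Hb HS]] E; exists b; split; auto.
intros g Hg; unfold inStab.
eapply eqv_trans; [apply gact_eqv, eqv_sym, E|].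
eapply eqv_trans; [apply HS, Hg|exact E].
Qed.

Lemma inW_eqv : forall a b : V, eqv a b -> inW D a -> inW D b.
Proof.
intros a b; revert a; induction b as [y|J g IH]; intros [x|I f]; simpl; try tauto.
intros E [HS Hel]; split.
- eapply symm_eqv; [exact HS| exact E].
- intro j; destruct (proj2 E j) as [i Hi]; eapply IH; eauto.
Qed.

Lemma inW_mem : forall A a : V, inW D A -> mem a A -> inW D a.
Proof.
intros [x|I f] a; simpl; [tauto|].
intros [_ H] [i Hi]; eapply inW_eqv; [apply eqv_sym, Hi|auto].
Qed.

Definition fixedBy (b : X -> Prop) (a : V) := forall g, fixesAtoms D g b -> eqv (gact D g a) a.

Lemma fixed_set : forall I (f : I -> V) g, (forall i, eqv (gact D g (f i)) (f i)) ->
  eqv (gact D g (Sets I f)) (Sets I f).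
Proof. intros I f g H; simpl; split; intro i; exists i; auto. Qed.

Lemma inW_set : forall b I (f : I -> V), ideal D b -> (forall i, fixedBy b (f i)) ->
  (forall i, inW D (f i)) -> inW D (Sets I f).
Proof.
intros b I f Hb Hf Hw; simpl; split; auto.
exists b; split; auto; intros g Hg; apply fixed_set; intro i; apply Hf; auto.
Qed.

Lemma inW_supported : forall a : V, inW D a -> exists b, ideal D b /\ fixedBy b a.
Proof.
intros [x|I f] H.
- exists (fun y => y = x); split; [apply ideal_single|].
  intros g Hg; simpl; apply Hg; reflexivity.
- destruct H as [[b [Hb HS]] _]; exists b; split; auto.
Qed.



Lemma sing_cong : forall a a' : V, eqv a a' -> eqv (sing a) (sing a').
Proof. intros a a' H; simpl; split; intro u; exists u; exact H. Qed.

Lemma upair_cong : forall a a' c c' : V, eqv a a' -> eqv c c' -> eqv (upair a c) (upair a' c').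
Proof. intros a a' c c' H1 H2; simpl; split; intros [|]; [exists true|exists false|exists true|exists false]; auto. Qed.

Lemma kpair_cong : forall a a' c c' : V, eqv a a' -> eqv c c' -> eqv (kpair a c) (kpair a' c').
Proof. intros; unfold kpair; apply upair_cong; [apply sing_cong|apply upair_cong]; auto. Qed.

Lemma gact_upair : forall g (a c : V), eqv (gact D g (upair a c)) (upair (gact D g a) (gact D g c)).
Proof. intros; simpl; split; intros [|]; [exists true|exists false|exists true|exists false]; apply eqv_refl. Qed.

Lemma gact_kpair : forall g (a c : V), eqv (gact D g (kpair a c)) (kpair (gact D g a) (gact D g c)).
Proof.
intros g a c; unfold kpair.
eapply eqv_trans; [apply gact_upair|].
apply upair_cong; [apply eqv_refl|apply gact_upair].
Qed.

Lemma upair_inv : forall a c a' c' : V, eqv (upair a c) (upair a' c') ->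
  (eqv a a' /\ eqv c c') \/ (eqv a c' /\ eqv c a').
Proof.
intros a c a' c' [H1 H2].
destruct (H1 true) as [[|] E1]; destruct (H1 false) as [[|] E2];
destruct (H2 true) as [[|] E3]; destruct (H2 false) as [[|] E4]; simpl in *;
first [solve [left; split; eauto 6 using eqv_trans, eqv_sym] | solve [right; split; eauto 6 using eqv_trans, eqv_sym]].
Qed.

Lemma sing_inv : forall a a' : V, eqv (sing a) (sing a') -> eqv a a'.
Proof. intros a a' [H1 _]; destruct (H1 tt) as [_ H]; exact H. Qed.

Lemma sing_upair : forall a c d : V, eqv (sing a) (upair c d) -> eqv a c /\ eqv a d.
Proof.
intros a c d [_ H2]; destruct (H2 true) as [_ E1]; destruct (H2 false) as [_ E2]; auto.
Qed.

Lemma kpair_inj : forall a c a' c' : V, eqv (kpair a c) (kpair a' c') -> eqv a a' /\ eqv c c'.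
Proof.
intros a c a' c' H; unfold kpair in H.
destruct (upair_inv _ _ _ _ H) as [[H1 H2]|[H1 H2]].
- apply sing_inv in H1. split; auto.
  destruct (upair_inv _ _ _ _ H2) as [[H3 H4]|[H3 H4]]; auto.
  eauto using eqv_trans, eqv_sym.
- apply sing_upair in H1. apply eqv_sym, sing_upair in H2.
  destruct H1 as [H1 H1']; destruct H2 as [H2 H2'].
  split; auto. eauto using eqv_trans, eqv_sym.
Qed.

Definition fixAll b (A : V) := forall g, fixesAtoms D g b -> inPstab D g A.

Lemma inW_kpair : forall b (x y : V), ideal D b -> fixedBy b x -> fixedBy b y ->
  inW D x -> inW D y -> inW D (kpair x y).
Proof.
intros b x y Hb Hx Hy Wx Wy.
assert (Fs : fixedBy b (sing x)) by (intros g Hg; apply fixed_set; intros _; apply Hx; auto).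
assert (Fu : fixedBy b (upair x y)) by
  (intros g Hg; apply fixed_set; intros [|]; cbv beta iota; [apply Hx|apply Hy]; auto).
assert (Ws : inW D (sing x)) by (apply inW_set with b; auto).
assert (Wu : inW D (upair x y)) by (apply inW_set with b; auto; intros [|]; cbv beta iota; auto).
unfold kpair. apply inW_set with b; auto; intros [|]; cbv beta iota; auto.
Qed.

Lemma fixedBy_kpair : forall b (x y : V), fixedBy b x -> fixedBy b y -> fixedBy b (kpair x y).
Proof.
intros b x y Hx Hy g Hg.
eapply eqv_trans; [apply gact_kpair|]. apply kpair_cong; auto.
Qed.

Lemma subset_fixed : forall b (A B : V), ideal D b -> inW D A -> fixAll b A -> subset B A ->
  fixedBy b B /\ inW D B.
Proof.
intros b A [y|K h] Hb HA HF [HS HB]; [destruct HS|].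
assert (Hm : forall k, mem (h k) A) by (intro k; apply HB; exists k; apply eqv_refl).
assert (Fx : fixedBy b (Sets K h)) by
  (intros g Hg; apply fixed_set; intro k; apply (HF g Hg); auto).
split; auto.
apply inW_set with b; auto.
- intros k g Hg; apply (HF g Hg); auto.
- intro k; eapply inW_mem; eauto.
Qed.

Lemma two_to_three : forall A : V, inW D A -> (exists b, ideal D b /\ fixAll b A) ->
  forall C, subPow C A -> inW D C.
Proof.
intros A HA [b [Hb HF]] [x|J f] [HS HC]; [destruct HS|].
apply inW_set with b; auto.
- intro j; apply (subset_fixed b A); auto; apply HC; exists j; apply eqv_refl.
- intro j; apply (subset_fixed b A); auto; apply HC; exists j; apply eqv_refl.
Qed.

Section WOs.
Variable A : V.
Variable R : elts A -> elts A -> Prop.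
Hypothesis Ha : forall x y, R x y -> R y x -> x = y.
Hypothesis Ht : forall x y z, R x y -> R y z -> R x z.
Hypothesis Htot : forall x y, R x y \/ R y x.
Hypothesis Hmin : forall P : elts A -> Prop, (exists x, P x) -> exists m, P m /\ forall x, P x -> R m x.

Local Notation e := (el A).

Lemma Rrefl : forall x, R x x.
Proof. intro x; destruct (Htot x x); auto. Qed.

Definition canon i := forall k, eqv (e k) (e i) -> R i k.

Lemma canon_exists : forall i, exists i', canon i' /\ eqv (e i) (e i').
Proof.
intro i; destruct (Hmin (fun k => eqv (e k) (e i))) as [m [Pm Lm]].
- exists i; apply eqv_refl.
- exists m; split.
  + intros k Hk; apply Lm; eapply eqv_trans; eauto.
  + apply eqv_sym; auto.
Qed.

Lemma mem_canon : forall a, mem a A -> exists i, canon i /\ eqv a (e i).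
Proof.
intros a H; apply mem_el in H; destruct H as [i0 H0].
destruct (canon_exists i0) as [i [Ci Ei]]; exists i; split; auto; eapply eqv_trans; eauto.
Qed.

Lemma canon_inj : forall i j, canon i -> canon j -> eqv (e i) (e j) -> i = j.
Proof. intros i j Ci Cj E; apply Ha; [apply Ci; apply eqv_sym; auto| apply Cj; auto]. Qed.

Definition seg i := Sets {k | canon k /\ R k i} (fun s => e (proj1_sig s)).
Definition Cseg := Sets {i | canon i} (fun s => seg (proj1_sig s)).

Lemma Cseg_subPow : subPow Cseg A.
Proof.
split; [exact I|]. intros B [s Hs].
destruct B as [y|K h]; [destruct Hs|].
split; [exact I|]. intros c Hc.
apply (mem_eqv_r _ _ _ Hs) in Hc. destruct Hc as [t Ht'].
apply mem_el; exists (proj1_sig t); exact Ht'.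
Qed.

Lemma rigid : forall g, eqv (gact D g Cseg) Cseg -> forall i, canon i -> eqv (gact D g (e i)) (e i).
Proof.
intros g HC i Ci; apply NNPP; intro Hn.
destruct (Hmin (fun k => canon k /\ ~ eqv (gact D g (e k)) (e k))) as [m [[Cm Nm] Lm]]; [eauto|].
assert (Below : forall k, canon k -> R k m -> k <> m -> eqv (gact D g (e k)) (e k)).
{ intros k Ck Rk Nk; apply NNPP; intro Hk; apply Nk; apply Ha; auto. }
destruct HC as [HC1 _].
destruct (HC1 (exist _ m Cm)) as [[j Cj] Hj].
destruct Hj as [Hj1 Hj2].
assert (F1 : forall k, canon k -> R k m -> exists t, canon t /\ R t j /\ eqv (gact D g (e k)) (e t)).
{ intros k Ck Rk. destruct (Hj1 (exist _ k (conj Ck Rk))) as [[t [Ct Rt]] Ht'].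
  exists t; split; [exact Ct|split; [exact Rt|exact Ht']]. }
assert (F2 : forall t, canon t -> R t j -> exists k, canon k /\ R k m /\ eqv (gact D g (e k)) (e t)).
{ intros t Ct Rt. destruct (Hj2 (exist _ t (conj Ct Rt))) as [[k [Ck Rk]] Ht'].
  exists k; split; [exact Ck|split; [exact Rk|exact Ht']]. }
clear Hj1 Hj2 HC1.
assert (Hmj : eqv (gact D g (e m)) (e j)).
{ destruct (F2 j Cj (Rrefl j)) as [k [Ck [Rk Hk]]].
  destruct (classic (k = m)) as [Ek|Nk]; [rewrite <- Ek; exact Hk|].
  pose proof (Below k Ck Rk Nk) as Ek.
  assert (kj : k = j) by (apply canon_inj; auto; eapply eqv_trans; [apply eqv_sym, Ek|exact Hk]).
  rewrite kj in Rk, Nk.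
  destruct (F1 m Cm (Rrefl m)) as [t [Ct [Rt Htt]]].
  destruct (classic (t = m)) as [Et|Nt].
  - rewrite Et in Rt. exfalso; apply Nk; apply Ha; auto.
  - pose proof (Below t Ct (Ht _ _ _ Rt Rk) Nt) as Et.
    exfalso; apply Nt; apply canon_inj; auto.
    apply eqv_sym, (gact_cancel g).
    eapply eqv_trans; [exact Htt|apply eqv_sym, Et]. }
destruct (classic (j = m)) as [Ej|Nj]; [apply Nm; rewrite <- Ej at 2; exact Hmj|].
destruct (Htot j m) as [Rjm|Rmj].
- pose proof (Below j Cj Rjm Nj) as Ej.
  apply Nj; apply canon_inj; auto. apply eqv_sym, (gact_cancel g).
  eapply eqv_trans; [exact Hmj|apply eqv_sym, Ej].
- destruct (F2 m Cm Rmj) as [k [Ck [Rk Hk]]].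
  destruct (classic (k = m)) as [Ek|Nk]; [apply Nm; rewrite <- Ek at 1; exact Hk|].
  pose proof (Below k Ck Rk Nk) as Ek.
  apply Nk; apply canon_inj; auto. eapply eqv_trans; [apply eqv_sym, Ek|exact Hk].
Qed.

Lemma three_to_two : (forall C, subPow C A -> inW D C) -> exists b, ideal D b /\ fixAll b A.
Proof.
intro H3. destruct (H3 Cseg Cseg_subPow) as [[b [Hb HS]] _].
exists b; split; auto. intros g Hg B HB.
destruct (mem_canon B HB) as [i [Ci Ei]].
pose proof (rigid g (HS g Hg) i Ci) as Hr.
eapply eqv_trans; [apply gact_eqv, Ei|]. eapply eqv_trans; [exact Hr|apply eqv_sym, Ei].
Qed.

Definition RvI := {p : elts A * elts A | canon (fst p) /\ canon (snd p) /\ R (fst p) (snd p) /\ fst p <> snd p}.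
Definition Rv := Sets RvI (fun p => kpair (e (fst (proj1_sig p))) (e (snd (proj1_sig p)))).

Lemma rel_Rv : forall a c, mem (kpair a c) Rv <-> exists i j, canon i /\ canon j /\ R i j /\ i <> j /\ eqv a (e i) /\ eqv c (e j).
Proof.
intros a c; split.
- intros [[[i j] [Ci [Cj [Rij Nij]]]] Hp]. apply kpair_inj in Hp. simpl in *.
  exists i, j; tauto.
- intros [i [j [Ci [Cj [Rij [Nij [Ea Ec]]]]]]].
  exists (exist _ (i, j) (conj Ci (conj Cj (conj Rij Nij)))). simpl. apply kpair_cong; auto.
Qed.

Lemma two_to_one : inW D A -> forall b, ideal D b -> fixAll b A -> wellorderableW D A.
Proof.
intros HA b Hb HF. exists Rv. split.
{ apply inW_set with b; auto.
  - intros [[i j] Hp]; simpl. apply fixedBy_kpair; intros g Hg; apply (HF g Hg); apply el_mem.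
  - intros [[i j] Hp]; simpl. apply inW_kpair with b; auto;
      try (intros g Hg; apply (HF g Hg); apply el_mem);
      eapply inW_mem; eauto; apply el_mem. }
split.
{ intros p [[[i j] Hp] Ep]. exists (e i), (e j); split; [apply el_mem|split; [apply el_mem|exact Ep]]. }
cbv beta zeta.
split.
{ intros a Ha' H. apply rel_Rv in H. destruct H as [i [j [Ci [Cj [Rij [Nij [E1 E2]]]]]]].
  apply Nij, canon_inj; auto. eapply eqv_trans; [apply eqv_sym, E1|exact E2]. }
split.
{ intros a b' c _ _ _ H1 H2. apply rel_Rv in H1; apply rel_Rv in H2; apply rel_Rv.
  destruct H1 as [i [j [Ci [Cj [Rij [Nij [E1 E2]]]]]]].
  destruct H2 as [i' [j' [Ci' [Cj' [Rij' [Nij' [E1' E2']]]]]]].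
  assert (jj : j = i') by (apply canon_inj; auto; eapply eqv_trans; [apply eqv_sym, E2|exact E1']).
  rewrite <- jj in Rij', Nij'.
  exists i, j'; repeat split; auto.
  - eapply Ht; eauto.
  - intro E; rewrite <- E in Rij'. apply Nij; apply Ha; auto. }
split.
{ intros a c Hma Hmc.
  destruct (mem_canon a Hma) as [i [Ci Ei]]; destruct (mem_canon c Hmc) as [j [Cj Ej]].
  destruct (classic (i = j)) as [Eij|Nij].
  - right; left. rewrite Eij in Ei. eapply eqv_trans; [exact Ei|apply eqv_sym, Ej].
  - destruct (Htot i j) as [Rij|Rji].
    + left; apply rel_Rv; exists i, j; repeat split; auto.
    + right; right; apply rel_Rv; exists j, i; repeat split; auto. }
{ intros S HS Hsub [x Hx].
  destruct (Hmin (fun k => canon k /\ mem (e k) S)) as [m [[Cm Sm] Lm]].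
  - destruct (mem_canon x (proj2 Hsub x Hx)) as [i [Ci Ei]].
    exists i; split; auto; eapply mem_eqv_l; eauto.
  - exists (e m); split; auto. intros a Hma H.
    apply rel_Rv in H. destruct H as [i [j [Ci [Cj [Rij [Nij [E1 E2]]]]]]].
    assert (mj : m = j) by (apply canon_inj; auto).
    rewrite <- mj in Rij, Nij.
    apply Nij, Ha; auto. apply Lm; split; auto. eapply mem_eqv_l; eauto. }
Qed.

End WOs.


Lemma one_to_two : forall A : V, inW D A -> wellorderableW D A -> exists b, ideal D b /\ fixAll b A.
Proof.
intros [x|J f] HA HWO.
{ exists (fun y => y = x); split; [apply ideal_single|]. intros g _ B HB; destruct HB. }
destruct HA as [[bA [HbA HSA]] HWf].
destruct HWO as [R [HWR [HRp [_ [_ [Htri Hmin']]]]]].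
destruct (inW_supported R HWR) as [bR [HbR HfR]].
pose (b' := fun y => bA y \/ bR y).
assert (Hb' : ideal D b') by (apply ideal_union; auto).
pose (A := Sets J f).
assert (FA : forall k, fixesAtoms D k b' -> eqv (gact D k A) A).
{ intros k Hk; apply HSA; intros y Hy; apply Hk; left; auto. }
assert (FR : forall k, fixesAtoms D k b' -> eqv (gact D k R) R).
{ intros k Hk; apply HfR; intros y Hy; apply Hk; right; auto. }
assert (Finv : forall k, fixesAtoms D k b' -> fixesAtoms D (ginv D k) b').
{ intros k Hk y Hy. pose proof (act_invl k y) as E. rewrite (Hk y Hy) in E. exact E. }
assert (Fconj : forall k h, fixesAtoms D k b' -> fixesAtoms D h b' ->
          fixesAtoms D (gmul D k (gmul D h (ginv D k))) b').
{ intros k h Hk Hh y Hy. rewrite !actM. rewrite (Finv k Hk y Hy), (Hh y Hy), (Hk y Hy). reflexivity. }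
pose (Bad := fun a : V => exists h, fixesAtoms D h b' /\ ~ eqv (gact D h a) a).
assert (Bad_eqv : forall a a', eqv a a' -> Bad a -> Bad a').
{ intros a a' E [h [Hh Nh]]; exists h; split; auto; intro E'; apply Nh.
  eapply eqv_trans; [apply gact_eqv, E|]. eapply eqv_trans; [exact E'|apply eqv_sym, E]. }
assert (Bad_act : forall k a, fixesAtoms D k b' -> Bad a -> Bad (gact D k a)).
{ intros k a Hk [h [Hh Nh]]. exists (gmul D k (gmul D h (ginv D k))); split; [apply Fconj; auto|].
  intro E; apply Nh. apply (gact_cancel k).
  eapply eqv_trans; [|exact E]. apply eqv_sym.
  eapply eqv_trans; [apply gact_mul|]. apply gact_eqv.
  eapply eqv_trans; [apply gact_mul|]. apply gact_eqv. apply gact_invl. }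
assert (memA_act : forall k a, fixesAtoms D k b' -> mem a A -> mem (gact D k a) A).
{ intros k a Hk Ha; eapply mem_eqv_r; [apply FA, Hk|]. apply mem_gact; auto. }
assert (rel_cong : forall a a' c c', eqv a a' -> eqv c c' -> mem (kpair a c) R -> mem (kpair a' c') R).
{ intros a a' c c' E1 E2 H; eapply mem_eqv_l; [apply kpair_cong; eauto|exact H]. }
assert (rel_act : forall k a c, fixesAtoms D k b' -> mem (kpair a c) R ->
          mem (kpair (gact D k a) (gact D k c)) R).
{ intros k a c Hk H. eapply mem_eqv_l; [apply gact_kpair|].
  eapply mem_eqv_r; [apply FR, Hk|]. apply mem_gact; auto. }
pose (S := Sets {j : J | Bad (f j)} (fun s => f (proj1_sig s))).
assert (memS : forall a, mem a S <-> mem a A /\ Bad a).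
{ intro a; split.
  - intros [[j Hj] E]; simpl in E. split; [exists j; exact E|]. eapply Bad_eqv; [apply eqv_sym, E|exact Hj].
  - intros [[j E] Hb]. exists (exist _ j (Bad_eqv _ _ E Hb)). exact E. }
destruct (classic (exists j, Bad (f j))) as [[j0 Hj0]|Hno].
- exfalso.
  assert (HSW : inW D S).
  { simpl; split; [|intro s; apply HWf].
    exists b'; split; auto. intros k Hk. unfold inStab. simpl. split.
    - intros [j Hj]; simpl.
      assert (Hm : mem (gact D k (f j)) A) by (apply memA_act; auto; exists j; apply eqv_refl).
      destruct Hm as [t Et].
      exists (exist _ t (Bad_eqv _ _ Et (Bad_act _ _ Hk Hj))); exact Et.
    - intros [t Ht']; simpl.
      assert (Hm : mem (gact D (ginv D k) (f t)) A) by (apply memA_act; auto; exists t; apply eqv_refl).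
      destruct Hm as [j Ej].
      exists (exist _ j (Bad_eqv _ _ Ej (Bad_act _ _ (Finv k Hk) Ht'))); simpl.
      eapply eqv_trans; [apply gact_eqv, eqv_sym, Ej|apply gact_invr]. }
  assert (Hsub : subset S A).
  { split; [exact I|]. intros c Hc; apply memS in Hc; tauto. }
  destruct (Hmin' S HSW Hsub) as [m [HmS Hm]].
  { exists (f j0); exists (exist _ j0 Hj0); apply eqv_refl. }
  apply memS in HmS. destruct HmS as [HmA Hbm].
  destruct Hbm as [h [Hh Nh]].
  assert (HhA : mem (gact D h m) A) by (apply memA_act; auto).
  destruct (Htri m (gact D h m) HmA HhA) as [Hr|[He|Hr]].
  + apply (rel_act (ginv D h)) in Hr; [|apply Finv; auto].
    apply (rel_cong _ (gact D (ginv D h) m) _ m) in Hr; [|apply eqv_refl|apply gact_invl].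
    apply (Hm (gact D (ginv D h) m)); auto.
    apply memS; split; [apply memA_act; auto; apply Finv; auto|].
    apply Bad_act; [apply Finv; auto|exists h; auto].
  + apply Nh, eqv_sym, He.
  + apply (Hm (gact D h m)); auto. apply memS; split; auto. apply Bad_act; auto. exists h; auto.
- exists b'; split; auto. intros g Hg B [j Ej].
  assert (Fj : eqv (gact D g (f j)) (f j)).
  { apply NNPP; intro N; apply Hno; exists j; exists g; auto. }
  eapply eqv_trans; [apply gact_eqv, Ej|]. eapply eqv_trans; [exact Fj|apply eqv_sym, Ej].
Qed.

Definition subOf (A : V) (p : elts A -> Prop) : V := Sets {i | p i} (fun s => el A (proj1_sig s)).
Definition PowW (A : V) : V :=
  Sets {p : elts A -> Prop | inW D (subOf A p)} (fun q => subOf A (proj1_sig q)).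

Lemma pow_props : forall b (A : V), inW D A -> ideal D b -> fixAll b A ->
  isPowW D A (PowW A) /\ fixAll b (PowW A).
Proof.
intros b A HA Hb HF.
assert (Fsub : forall p, fixedBy b (subOf A p)).
{ intros p g Hg; apply fixed_set; intros [i Hi]; simpl; apply (HF g Hg); apply el_mem. }
split; [split|].
- apply inW_set with b; auto. intros [p Hp]; exact Hp.
- intro C; split.
  + intros [[p Hp] E]; simpl in E. split; [eapply inW_eqv; [apply eqv_sym, E|exact Hp]|].
    destruct C as [y|K h]; [destruct E|]. split; [exact I|].
    intros c Hc. apply (mem_eqv_r _ _ _ E) in Hc. destruct Hc as [[i Hi] Ei].
    apply mem_el; exists i; exact Ei.
  + intros [HC [HS Hsub]]. destruct C as [y|K h]; [destruct HS|].
    assert (E : eqv (Sets K h) (subOf A (fun i => mem (el A i) (Sets K h)))).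
    { split.
      - intro k. assert (Hk : mem (h k) A) by (apply Hsub; exists k; apply eqv_refl).
        apply mem_el in Hk. destruct Hk as [i Ei].
        assert (Hi : mem (el A i) (Sets K h)) by (eapply mem_eqv_l; [exact Ei|exists k; apply eqv_refl]).
        exists (exist _ i Hi); exact Ei.
      - intros [i [k Ek]]. exists k; apply eqv_sym; exact Ek. }
    exists (exist _ (fun i => mem (el A i) (Sets K h)) (inW_eqv _ _ E HC)); exact E.
- intros g Hg B [[p Hp] E]; simpl in E.
  eapply eqv_trans; [apply gact_eqv, E|]. eapply eqv_trans; [apply Fsub; auto|apply eqv_sym, E].
Qed.

Lemma four_to_two : forall A P1 P2 : V, inW D A -> isPowW D A P1 -> isPowW D P1 P2 ->
  wellorderableW D P2 -> exists b, ideal D b /\ fixAll b A.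
Proof.
intros A P1 P2 HA [HW1 H1] [HW2 H2] HWO.
destruct (one_to_two P2 HW2 HWO) as [b [Hb HF]].
exists b; split; [exact Hb|]. intros g Hg B HB.
assert (WB : inW D B) by (apply (inW_mem A B HA HB)).
destruct (inW_supported B WB) as [c [Hc Fc]].
assert (W1 : inW D (sing B)) by (apply inW_set with c; auto).
assert (M1 : mem (sing B) P1).
{ apply H1; split; auto. split; [exact I|]. intros d [u Ed]; eapply mem_eqv_l; [apply eqv_sym, Ed|exact HB]. }
assert (W2 : inW D (sing (sing B))).
{ apply inW_set with c; auto. intros _ h Hh. apply fixed_set; intros _; apply Fc; auto. }
assert (M2 : mem (sing (sing B)) P2).
{ apply H2; split; auto. split; [exact I|]. intros d [u Ed]; eapply mem_eqv_l; [apply eqv_sym, Ed|exact M1]. }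
pose proof (HF g Hg _ M2) as E.
apply sing_inv, sing_inv in E. exact E.
Qed.

End Main.

Theorem mainTheorem2 (D : dynIdeal) (A : vset (atomT D)) (HA : inW D A) :
  (wellorderableW D A <->
     exists b, ideal D b /\ forall g, fixesAtoms D g b -> inPstab D g A) /\
  ((exists b, ideal D b /\ forall g, fixesAtoms D g b -> inPstab D g A) <->
     forall C : vset (atomT D), (subPow C A /\ inW D C) <-> subPow C A) /\
  ((forall C : vset (atomT D), (subPow C A /\ inW D C) <-> subPow C A) <->
     exists P1 P2, isPowW D A P1 /\ isPowW D P1 P2 /\ wellorderableW D P2).
Proof.
assert (E12 : wellorderableW D A <-> exists b, ideal D b /\ fixAll D b A).
{ split; [apply one_to_two; auto|]. intros [b [Hb HF]].
  destruct (wo_exists (elts D A)) as [R [Ha [Ht [Htot Hm]]]].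
  eapply two_to_one with (R := R); eauto. }
assert (E23 : (exists b, ideal D b /\ fixAll D b A) <-> forall C, subPow C A -> inW D C).
{ split; [apply two_to_three; auto|]. intro H3.
  destruct (wo_exists (elts D A)) as [R [Ha [Ht [Htot Hm]]]].
  eapply three_to_two with (R := R); eauto. }
assert (E24 : (exists b, ideal D b /\ fixAll D b A) <->
   exists P1 P2, isPowW D A P1 /\ isPowW D P1 P2 /\ wellorderableW D P2).
{ split.
  - intros [b [Hb HF]].
    destruct (pow_props D b A HA Hb HF) as [HP1 HF1].
    destruct (pow_props D b (PowW D A) (proj1 HP1) Hb HF1) as [HP2 HF2].
    exists (PowW D A), (PowW D (PowW D A)); split; [exact HP1|split; [exact HP2|]].
    destruct (wo_exists (elts D (PowW D (PowW D A)))) as [R [Ha [Ht [Htot Hm]]]].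
    eapply two_to_one with (R := R); eauto. exact (proj1 HP2).
  - intros [P1 [P2 [H1 [H2 H3]]]]; eapply four_to_two; eauto. }
unfold fixAll in *.
split; [exact E12|]. split.
- split; intro H.
  + intro C; split; [tauto|]. intro HC; split; auto. apply (proj1 E23 H); auto.
  + apply E23; intros C HC; apply (H C); auto.
- split; intro H.
  + apply E24, E23; intros C HC; apply (H C); auto.
  + intro C; split; [tauto|]. intro HC; split; auto. apply (proj1 E23 (proj2 E24 H)); auto.
Qed.
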